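(* Let $G$ be a (possibly infinite) graph and $k$ a positive integer such that $G$ contains no path on $k$ vertices as a subgraph and every vertex of $G$ lies on fewer than $k$ pairwise edge-disjoint cycles. Then, whatever the cat's starting vertex and play, the herder can capture the cat after at most $k^3-2k^2+3k-2$ edge deletions; i.e. $\mathrm{cat}(G)\le k^3-2k^2+3k-2$.
   Context: Cat Herding is played on a simple, possibly infinite graph $G$. The cat first places its token on a vertex. Then the players alternate, the herder moving first: the herder deletes one edge of the current graph, and then, unless the cat's current vertex has degree $0$ in the current graph, the cat moves its token along a finite path with at least one edge in the current graph to a different vertex. The cat is captured when its vertex has degree $0$ in the current graph; the score is the number of edges deleted. $\mathrm{cat}(G)$ denotes the optimal score (herder minimizing, cat maximizing, cat choosing the start). *)

(* Defs.v *)
From Stdlib Require Import List Arith Relations.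
Import ListNotations.

Section Graphs.
Context {V : Type} (adj : V -> V -> Prop).

(* A simple graph: adj symmetric and irreflexive (assumed in the theorem). *)

Definition cur_adj (D : list (V * V)) (x y : V) : Prop :=
  adj x y /\ ~ In (x, y) D /\ ~ In (y, x) D.

Definition isolated (D : list (V * V)) (v : V) : Prop :=
  forall w, ~ cur_adj D v w.

(* herder_wins n D v : it is the herder's turn, edges D have been deleted,
   the cat sits at v; the herder can force capture using at most n further
   edge deletions, whatever the cat does. *)
Fixpoint herder_wins (n : nat) (D : list (V * V)) (v : V) : Prop :=
  match n with
  | 0 => isolated D v
  | S m => isolated D v \/
      exists x y, cur_adj D x y /\
        forall w, w <> v -> clos_trans V (cur_adj ((x, y) :: D)) v w ->
          herder_wins m ((x, y) :: D) w
  end.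

Definition cat_le (N : nat) : Prop := forall v, herder_wins N [] v.

Fixpoint is_walk (l : list V) : Prop :=
  match l with
  | x :: ((y :: _) as t) => adj x y /\ is_walk t
  | _ => True
  end.

Definition has_path_on (k : nat) : Prop :=
  exists l : list V, length l = k /\ NoDup l /\ is_walk l.

(* a cycle given by its cyclic vertex sequence *)
Definition is_cycle (c : list V) : Prop :=
  3 <= length c /\ NoDup c /\
  match c with x :: _ => is_walk (c ++ [x]) | [] => False end.

Fixpoint walk_edges (l : list V) : list (V * V) :=
  match l with
  | x :: ((y :: _) as t) => (x, y) :: walk_edges t
  | _ => []
  end.

Definition cycle_edges (c : list V) : list (V * V) :=
  match c with x :: _ => walk_edges (c ++ [x]) | [] => [] end.

Definition edge_disjoint (c1 c2 : list V) : Prop :=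
  forall x y, In (x, y) (cycle_edges c1) ->
    ~ In (x, y) (cycle_edges c2) /\ ~ In (y, x) (cycle_edges c2).

Definition on_k_disjoint_cycles (v : V) (k : nat) : Prop :=
  exists cs : list (list V), length cs = k /\
    Forall (fun c => is_cycle c /\ In v c) cs /\
    forall i j, i < j < k -> edge_disjoint (nth i cs []) (nth j cs []).

End Graphs.

(* Main.v *)
Require Import Defs.
From Stdlib Require Import List Arith Relations Lia Classical.
Import ListNotations.



Lemma walk_cons2 {V} (R : V -> V -> Prop) a b l :
  is_walk R (a :: b :: l) <-> R a b /\ is_walk R (b :: l).
Proof. simpl. tauto. Qed.

Lemma walk_mono {V} (R R' : V -> V -> Prop) l :
  (forall a b, R a b -> R' a b) -> is_walk R l -> is_walk R' l.
Proof.
  intros H. induction l as [|a l IH]; auto.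
  destruct l as [|b l]; auto. intros [H1 H2]. split; auto.
Qed.

Lemma walk_mono_in {V} (R R' : V -> V -> Prop) l :
  (forall a b, In a l -> In b l -> R a b -> R' a b) -> is_walk R l -> is_walk R' l.
Proof.
  induction l as [|a l IH]; intros H; auto.
  destruct l as [|b l]; auto. intros [H1 H2]. split.
  - apply H; simpl; auto.
  - apply IH; auto. intros; apply H; simpl in *; auto.
Qed.

Lemma walk_app {V} (R : V -> V -> Prop) l1 a l2 :
  is_walk R (l1 ++ a :: l2) <-> is_walk R (l1 ++ [a]) /\ is_walk R (a :: l2).
Proof.
  induction l1 as [|x l1 IH]; simpl.
  - tauto.
  - destruct l1 as [|y l1]; simpl in *.
    + tauto.
    + rewrite IH. tauto.
Qed.

Lemma NoDup_firstn' {A} n (l : list A) : NoDup l -> NoDup (firstn n l).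
Proof.
  intros H. rewrite <- (firstn_skipn n l) in H. eapply NoDup_app_remove_r; eauto.
Qed.

Lemma walk_firstn {V} (R : V -> V -> Prop) n l : is_walk R l -> is_walk R (firstn n l).
Proof.
  revert l. induction n as [|n IH]; intros l H; simpl; auto.
  destruct l as [|a l]; simpl; auto.
  destruct n as [|n]; simpl; auto.
  destruct l as [|b l]; simpl; auto.
  destruct H as [H1 H2]. split; auto. specialize (IH (b::l) H2). simpl in IH. exact IH.
Qed.

Definition conn {V} (R : V -> V -> Prop) a b := a = b \/ clos_trans V R a b.

Lemma last_indep {A} (l : list A) d d' : l <> [] -> last l d = last l d'.
Proof.
  induction l as [|x l IH]; intros H; [congruence|].
  destruct l as [|y l]; simpl; auto. apply IH. discriminate.
Qed.

Lemma last_app_ne {A} (l1 l2 : list A) d : l2 <> [] -> last (l1 ++ l2) d = last l2 d.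
Proof.
  induction l1 as [|x l1 IH]; intros H; simpl; auto.
  destruct (l1 ++ l2) as [|v l] eqn:E.
  - apply app_eq_nil in E. tauto.
  - change (last (v :: l) d = last l2 d). apply IH; auto.
Qed.

Lemma In_last {A} (a : A) l d : In (last (a::l) d) (a::l).
Proof.
  revert a. induction l as [|b l IH]; intros a; simpl; auto.
  right. specialize (IH b). exact IH.
Qed.

Lemma ct_walk {V} (R : V -> V -> Prop) a b :
  clos_trans V R a b -> exists l, l <> [] /\ is_walk R (a::l) /\ last (a::l) a = b.
Proof.
  intros H. apply clos_trans_t1n in H. induction H as [a b H|a c b H H1 IH].
  - exists [b]. split; [discriminate|]. simpl; auto.
  - destruct IH as [l [Hl [Hw He]]]. exists (c :: l). split; [discriminate|].
    split. { simpl. split; auto. }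
    rewrite <- He. change (last (a :: c :: l) a) with (last (c :: l) a).
    apply last_indep. discriminate.
Qed.

Lemma walk_conn {V} (R : V -> V -> Prop) a l u :
  is_walk R (a::l) -> In u (a::l) -> conn R a u.
Proof.
  revert a. induction l as [|b l IH]; intros a Hw Hu.
  - destruct Hu as [<-|[]]. left; auto.
  - destruct Hu as [<-|Hu]. left; auto.
    destruct Hw as [H1 H2]. specialize (IH b H2 Hu).
    right. destruct IH as [<-|IH]. apply t_step; auto.
    eapply t_trans; [apply t_step; eauto| exact IH].
Qed.

Lemma walk_last_conn {V} (R : V -> V -> Prop) a l :
  is_walk R (a::l) -> conn R a (last (a::l) a).
Proof. intros H. eapply walk_conn; eauto. apply In_last. Qed.

Lemma shorten {V} (R : V -> V -> Prop) : forall n l a, length l <= n -> is_walk R (a::l) ->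
  exists l', NoDup (a::l') /\ is_walk R (a::l') /\ last (a::l') a = last (a::l) a /\ incl l' l.
Proof.
  induction n as [|n IH]; intros l a Hn Hw.
  - destruct l; [|simpl in Hn; lia]. exists []. repeat split; auto.
    constructor; auto. constructor. intros ? [].
  - destruct (classic (In a l)) as [Ha|Ha].
    + destruct (in_split _ _ Ha) as [l1 [l2 E]]. subst l.
      assert (Hw2 : is_walk R (a :: l2)).
      { apply (walk_app R (a::l1) a l2) in Hw. tauto. }
      destruct (IH l2 a) as [l' [H1 [H2 [H3 H4]]]]; auto.
      { rewrite length_app in Hn. simpl in Hn. lia. }
      exists l'. repeat split; auto.
      * rewrite H3. change (a :: l1 ++ a :: l2) with ((a :: l1) ++ a :: l2).
        rewrite last_app_ne by discriminate. reflexivity.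
      * intros y Hy. apply in_or_app. right. right. apply H4; auto.
    + destruct l as [|c l].
      * exists []. repeat split; auto. constructor; auto. constructor. intros ? [].
      * destruct Hw as [Hac Hw].
        destruct (IH l c) as [l' [H1 [H2 [H3 H4]]]]; auto. simpl in Hn; lia.
        exists (c :: l'). repeat split.
        -- constructor; auto. intros Hin. apply Ha. destruct Hin as [<-|Hin]; simpl; auto.
        -- auto.
        -- auto.
        -- change (last (a :: c :: l') a) with (last (c :: l') a).
           change (last (a :: c :: l) a) with (last (c :: l) a).
           rewrite (last_indep (c::l') a c) by discriminate.
           rewrite (last_indep (c::l) a c) by discriminate. auto.
        -- intros y [<-|Hy]; simpl; auto.
Qed.

Lemma ct_path {V} (R : V -> V -> Prop) a b :
  clos_trans V R a b -> exists l, NoDup (a::l) /\ is_walk R (a::l) /\ last (a::l) a = b.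
Proof.
  intros H. destruct (ct_walk R a b H) as [l [_ [Hw He]]].
  destruct (shorten R (length l) l a (le_n _) Hw) as [l' [H1 [H2 [H3 _]]]].
  exists l'. repeat split; auto. congruence.
Qed.

Lemma ct_sym {V} (R : V -> V -> Prop) : (forall x y, R x y -> R y x) ->
  forall a b, clos_trans V R a b -> clos_trans V R b a.
Proof.
  intros Hs a b H. induction H. apply t_step; auto. eapply t_trans; eauto.
Qed.

Lemma conn_sym {V} (R : V -> V -> Prop) : (forall x y, R x y -> R y x) ->
  forall a b, conn R a b -> conn R b a.
Proof. intros Hs a b [<-|H]; [left; auto|right; apply ct_sym; auto]. Qed.

Lemma conn_trans {V} (R : V -> V -> Prop) a b c : conn R a b -> conn R b c -> conn R a c.
Proof.
  intros [<-|H1] [<-|H2]; try (left; reflexivity); try (right; assumption).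
  right; eapply t_trans; eauto.
Qed.

Lemma ct_mono {V} (R R' : V -> V -> Prop) a b : (forall x y, R x y -> R' x y) ->
  clos_trans V R a b -> clos_trans V R' a b.
Proof. intros Hm H; induction H; [apply t_step; auto| eapply t_trans; eauto]. Qed.

Lemma conn_mono {V} (R R' : V -> V -> Prop) a b : (forall x y, R x y -> R' x y) ->
  conn R a b -> conn R' a b.
Proof. intros Hm [H|H]; [left; auto|right; eapply ct_mono; eauto]. Qed.

Lemma cur_cons {V} (adj : V -> V -> Prop) D a b x y :
  cur_adj adj ((a,b)::D) x y <-> cur_adj adj D x y /\ (a,b) <> (x,y) /\ (a,b) <> (y,x).
Proof. unfold cur_adj; simpl. intuition. Qed.

Lemma cur_cons_sub {V} (adj : V -> V -> Prop) D e x y :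
  cur_adj adj (e::D) x y -> cur_adj adj D x y.
Proof. destruct e. rewrite cur_cons. tauto. Qed.

Lemma cur_sym {V} (adj : V -> V -> Prop) (Hs : forall x y, adj x y -> adj y x) D x y :
  cur_adj adj D x y -> cur_adj adj D y x.
Proof. unfold cur_adj. intuition. Qed.

Lemma hw_S {V} (adj : V -> V -> Prop) n : forall D v,
  herder_wins adj n D v -> herder_wins adj (S n) D v.
Proof.
  induction n as [|n IH]; intros D v H.
  - left; exact H.
  - destruct H as [H|[x [y [H1 H2]]]]. left; auto.
    right. exists x, y. split; auto.
Qed.

Lemma hw_le {V} (adj : V -> V -> Prop) n n' D v :
  n <= n' -> herder_wins adj n D v -> herder_wins adj n' D v.
Proof.
  intros Hle. induction Hle; auto. intros H. apply hw_S; auto.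
Qed.

Lemma del_list {V} (adj : V -> V -> Prop) : forall (L : list (V*V)) m D v,
  (forall D' w, (forall a b, cur_adj adj D' a b -> cur_adj adj D a b) ->
      (forall e, In e L -> ~ cur_adj adj D' (fst e) (snd e)) ->
      conn (cur_adj adj D) v w -> herder_wins adj m D' w) ->
  herder_wins adj (length L + m) D v.
Proof.
  induction L as [|[a b] L IH]; intros m D v H.
  - simpl. apply H; [auto| intros _ [] | left; auto].
  - destruct (classic (cur_adj adj D a b)) as [Hab|Hab].
    + simpl length. simpl. right. exists a, b. split; auto.
      intros w Hwv Hw. apply IH. intros D' w' H1 H2 H3. apply H.
      * intros x y Hxy. apply cur_cons_sub with (e := (a,b)). auto.
      * intros e [<-|He]; auto. simpl. intros Hc. apply H1 in Hc.
        rewrite cur_cons in Hc. tauto.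
      * eapply conn_trans. right. eapply ct_mono; [|exact Hw]. intros; eapply cur_cons_sub; eauto.
        eapply conn_mono; [|exact H3]. intros; eapply cur_cons_sub; eauto.
    + simpl length. apply hw_S. apply IH. intros D' w H1 H2 H3. apply H; auto.
      intros e [<-|He]; [|auto]. simpl. intros Hc. apply Hab, H1, Hc.
Qed.

Definition depth_le {V} (adj : V -> V -> Prop) d D x :=
  forall t, NoDup (x::t) -> is_walk (cur_adj adj D) (x::t) -> length (x::t) <= d.

Lemma first_split {V} (P : V -> Prop) : forall l, (exists u, In u l /\ P u) ->
  exists pre y post, l = pre ++ y :: post /\ (forall u, In u pre -> ~ P u) /\ P y.
Proof.
  induction l as [|a l IH]; intros [u [Hu Pu]]. destruct Hu.
  destruct (classic (P a)) as [Pa|Pa].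
  - exists [], a, l. repeat split; auto; intros _ [].
  - destruct Hu as [<-|Hu]. contradiction.
    destruct IH as [pre [y [post [E [H1 H2]]]]]. eauto.
    exists (a::pre), y, post. subst l. repeat split; auto.
    intros z [<-|Hz]; auto.
Qed.

Lemma reroot {V} (adj : V -> V -> Prop) (Hs : forall x y, adj x y -> adj y x) d D D1 x w :
  depth_le adj (S d) D x -> conn (cur_adj adj D) x w ->
  (forall a b, cur_adj adj D1 a b -> cur_adj adj D a b) ->
  ~ conn (cur_adj adj D1) x w ->
  exists y, depth_le adj d D1 y /\ conn (cur_adj adj D1) y w.
Proof.
  intros Hd Hc Hsub Hn.
  destruct Hc as [<-|Hc]. { exfalso; apply Hn; left; auto. }
  destruct (ct_path _ _ _ Hc) as [l [Hnd [Hw He]]].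
  set (C := fun u => conn (cur_adj adj D1) u w).
  destruct (first_split C (x::l)) as [pre [y [post [E [H1 H2]]]]].
  { exists w. split; [rewrite <- He; apply In_last|]. left; auto. }
  exists y. split; auto.
  destruct pre as [|x' pre'].
  { simpl in E. injection E; intros; subst. contradiction. }
  simpl in E. injection E as <- E.
  intros t Hnt Hwt.
  assert (HC : forall u, In u (y::t) -> C u).
  { intros u Hu. apply (walk_conn _ _ _ _ Hwt) in Hu.
    eapply conn_trans. apply conn_sym; [apply cur_sym; auto|exact Hu]. exact H2. }
  assert (Hlen : length (x :: pre' ++ y :: t) <= S d).
  { apply Hd.
    - change (NoDup ((x::pre') ++ y :: t)). apply NoDup_app; auto.
      + rewrite E in Hnd. change (x :: pre' ++ y :: post) with ((x::pre') ++ y :: post) in Hnd.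
        eapply NoDup_app_remove_r; eauto.
      + intros a Ha Ha2. apply (H1 a Ha). apply HC; auto.
    - change (is_walk (cur_adj adj D) ((x::pre') ++ y :: t)). apply walk_app. split.
      + rewrite E in Hw. change (x :: pre' ++ y :: post) with ((x::pre') ++ y :: post) in Hw.
        apply walk_app in Hw. tauto.
      + eapply walk_mono; [|exact Hwt]. auto. }
  simpl in Hlen. rewrite length_app in Hlen. simpl in Hlen |- *. lia.
Qed.

Lemma bridge {V} (adj : V -> V -> Prop) (Hs : forall x y, adj x y -> adj y x)
  (Hirr : forall x, ~ adj x x) D' x w :
  (forall c, is_cycle (cur_adj adj D') c -> In x c -> False) ->
  w <> x ->
  clos_trans V (cur_adj adj D') x w ->
  exists z, cur_adj adj D' x z /\ ~ conn (cur_adj adj ((x,z)::D')) x w.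
Proof.
  intros NC Hwx Hc.
  destruct (ct_path _ _ _ Hc) as [l [Hnd [Hw He]]].
  destruct l as [|z t]. { simpl in He. congruence. }
  destruct Hw as [Hxz Hw].
  exists z. split; auto. intros Hcx.
  set (D'' := (x,z)::D').
  assert (Hxt : ~ In x (z::t)) by (inversion Hnd; auto).
  assert (Hw2 : is_walk (cur_adj adj D'') (z::t)).
  { eapply walk_mono_in; [|exact Hw]. intros a b Ha Hb Hab. unfold D''.
    rewrite cur_cons. split; auto. split; intros E; injection E; intros; subst; auto. }
  assert (Hzw : conn (cur_adj adj D'') z w).
  { pose proof (walk_last_conn _ _ _ Hw2) as H. rewrite <- He.
    change (last (x :: z :: t) x) with (last (z :: t) x).
    rewrite (last_indep _ x z) by discriminate. exact H. }
  assert (Hzx : conn (cur_adj adj D'') z x).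
  { eapply conn_trans; [exact Hzw|]. apply conn_sym; auto. intros a b; apply cur_sym; auto. }
  destruct Hzx as [Ezx|Hzx].
  { subst z. apply (Hirr x). apply Hxz. }
  destruct (ct_path _ _ _ Hzx) as [q [Hnq [Hwq Heq]]].
  destruct q as [|q1 q]. { simpl in Heq. subst z. apply (Hirr x). apply Hxz. }
  pose proof (app_removelast_last z (l := z :: q1 :: q) ltac:(discriminate)) as Ed.
  rewrite Heq in Ed. set (r := removelast (z :: q1 :: q)) in Ed.
  apply (NC (x :: r)); [|left; auto].
  assert (Hr : r = z :: removelast (q1 :: q)) by reflexivity.
  split; [|split].
  - assert (L := f_equal (@length V) Ed). rewrite length_app in L. simpl in L |- *.
    destruct q as [|q2 q].
    + exfalso. simpl in Heq. subst q1. destruct Hwq as [Hzx' _].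
      unfold D'' in Hzx'. rewrite cur_cons in Hzx'. tauto.
    + simpl. lia.
  - rewrite Ed in Hnq. constructor.
    + intros Hin. apply (NoDup_remove_2 r [] x Hnq). rewrite app_nil_r. auto.
    + eapply NoDup_app_remove_r; eauto.
  - change (is_walk (cur_adj adj D') (x :: (r ++ [x]))). rewrite <- Ed.
    split; auto. eapply walk_mono; [|exact Hwq]. intros a b; apply cur_cons_sub.
Qed.

Lemma walk_edges_In {V} (R : V -> V -> Prop) l a b :
  is_walk R l -> In (a,b) (walk_edges l) -> R a b.
Proof.
  induction l as [|x l IH]; simpl; [tauto|].
  destruct l as [|y l]; simpl; [tauto|].
  intros [H1 H2] [E|H]. injection E; intros; subst; auto. apply IH; auto.
Qed.

Lemma length_walk_edges {V} (l : list V) : length (walk_edges l) = length l - 1.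
Proof.
  induction l as [|x l IH]; simpl; auto.
  destruct l as [|y l]; simpl; auto. simpl in IH. rewrite IH. lia.
Qed.

Lemma length_cycle_edges {V} (c : list V) : length (cycle_edges c) = length c.
Proof.
  destruct c as [|x t]; [reflexivity|]. unfold cycle_edges.
  rewrite length_walk_edges. simpl. rewrite length_app. simpl. lia.
Qed.

Lemma cycle_edge_R {V} (R : V -> V -> Prop) c a b :
  is_cycle R c -> In (a,b) (cycle_edges c) -> R a b.
Proof.
  destruct c as [|x t]; [intros [_ [_ []]]|]. intros [_ [_ Hw]] H.
  eapply walk_edges_In; eauto.
Qed.

Lemma is_cycle_mono {V} (R R' : V -> V -> Prop) c :
  (forall a b, R a b -> R' a b) -> is_cycle R c -> is_cycle R' c.
Proof.
  intros Hm [H1 [H2 H3]]. split; auto. split; auto.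
  destruct c; auto. eapply walk_mono; eauto.
Qed.

Lemma cycle_walk {V} (R : V -> V -> Prop) c : is_cycle R c -> is_walk R c /\ NoDup c.
Proof.
  intros [H1 [H2 H3]]. split; auto. destruct c as [|x t]; [contradiction|].
  pose proof (walk_firstn R (length (x::t)) _ H3) as H.
  rewrite firstn_app, firstn_all, PeanoNat.Nat.sub_diag in H. simpl in H.
  rewrite app_nil_r in H. exact H.
Qed.

Lemma path_bound {V} (adj : V -> V -> Prop) k (no_path : ~ has_path_on adj k) l :
  NoDup l -> is_walk adj l -> length l < k.
Proof.
  intros Hn Hw. destruct (Nat.lt_ge_cases (length l) k) as [H|H]; auto.
  exfalso. apply no_path. exists (firstn k l). split; [apply firstn_length_le; auto|].
  split; [apply NoDup_firstn'; auto| apply walk_firstn; auto].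
Qed.

Definition famok {V} (adj : V -> V -> Prop) D x (fam : list (list V)) :=
  Forall (fun c => is_cycle (cur_adj adj D) c /\ In x c) fam /\
  forall i j, i < j < length fam -> edge_disjoint (nth i fam []) (nth j fam []).

Lemma fam_bound {V} (adj : V -> V -> Prop) k (few : forall v, ~ on_k_disjoint_cycles adj v k) D x fam :
  famok adj D x fam -> length fam < k.
Proof.
  intros [H1 H2]. destruct (Nat.lt_ge_cases (length fam) k) as [H|H]; auto.
  exfalso. apply (few x). exists (firstn k fam). split; [apply firstn_length_le; auto|].
  split.
  - rewrite Forall_forall in *. intros c Hc.
    assert (Hc' : In c fam). { rewrite <- (firstn_skipn k fam). apply in_or_app; auto. }
    destruct (H1 c Hc') as [Hcy Hx]. split; auto.
    eapply is_cycle_mono; [|exact Hcy]. intros a b [Hab _]; auto.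
  - intros i j Hij. rewrite !nth_firstn.
    replace (Nat.ltb i k) with true by (symmetry; apply Nat.ltb_lt; lia).
    replace (Nat.ltb j k) with true by (symmetry; apply Nat.ltb_lt; lia).
    apply H2. lia.
Qed.

Lemma nat_max (P : nat -> Prop) B : P 0 -> (forall m, P m -> m <= B) ->
  exists M, P M /\ forall m, P m -> m <= M.
Proof.
  intros H0 HB.
  assert (Hn : forall n, exists M, P M /\ forall m, P m -> m <= n -> m <= M).
  { induction n as [|n [M [HM HM2]]].
    - exists 0. split; auto.
    - destruct (classic (P (S n))) as [HP|HP].
      + exists (S n). split; auto.
      + exists M. split; auto. intros m Pm Hm.
        destruct (Nat.eq_dec m (S n)). subst; contradiction. apply HM2; auto; lia. }
  destruct (Hn B) as [M [HM HM2]]. exists M. split; auto.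
Qed.

Lemma max_fam {V} (adj : V -> V -> Prop) k (few : forall v, ~ on_k_disjoint_cycles adj v k) D x :
  exists fam, famok adj D x fam /\ forall fam', famok adj D x fam' -> length fam' <= length fam.
Proof.
  destruct (nat_max (fun m => exists fam, famok adj D x fam /\ length fam = m) k)
    as [M [[fam [Hf HM]] Hmax]].
  - exists []. split; auto. split; auto. intros; simpl in *; lia.
  - intros m [fam [Hf <-]]. apply Nat.lt_le_incl. eapply fam_bound; eauto.
  - exists fam. split; auto. intros fam' Hf'. rewrite HM. apply Hmax. eauto.
Qed.

Lemma no_cycle_after {V} (adj : V -> V -> Prop) (Hs : forall x y, adj x y -> adj y x)
  D D1 x fam :
  famok adj D x fam -> (forall fam', famok adj D x fam' -> length fam' <= length fam) ->
  (forall a b, cur_adj adj D1 a b -> cur_adj adj D a b) ->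
  (forall e, In e (flat_map cycle_edges fam) -> ~ cur_adj adj D1 (fst e) (snd e)) ->
  forall c, is_cycle (cur_adj adj D1) c -> In x c -> False.
Proof.
  intros [Hf1 Hf2] Hmax Hsub Habs c Hc Hx.
  assert (Hok : famok adj D x (fam ++ [c])).
  { split.
    - apply Forall_app. split; auto. constructor; auto. split; auto.
      eapply is_cycle_mono; eauto.
    - intros i j Hij. rewrite length_app in Hij. simpl in Hij.
      rewrite app_nth1 by lia.
      destruct (Nat.lt_ge_cases j (length fam)) as [Hj|Hj].
      + rewrite app_nth1 by lia. apply Hf2. lia.
      + replace j with (length fam) by lia. rewrite nth_middle.
        intros a b Hab.
        assert (HE : In (a,b) (flat_map cycle_edges fam)).
        { apply in_flat_map. exists (nth i fam []). split; auto. apply nth_In. lia. }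
        pose proof (Habs _ HE) as Hn. simpl in Hn.
        split; intros Hin.
        * apply Hn. eapply cycle_edge_R; eauto.
        * apply Hn. apply cur_sym; auto. eapply cycle_edge_R; eauto. }
  apply Hmax in Hok. rewrite length_app in Hok. simpl in Hok. lia.
Qed.

Lemma fam_edges_len {V} (adj : V -> V -> Prop) k (no_path : ~ has_path_on adj k)
  (few : forall v, ~ on_k_disjoint_cycles adj v k) D x fam :
  famok adj D x fam -> length (flat_map cycle_edges fam) <= (k-1)*(k-1).
Proof.
  intros Hf. pose proof (fam_bound adj k few D x fam Hf) as Hb.
  destruct Hf as [Hf _].
  assert (H : length (flat_map cycle_edges fam) <= length fam * (k-1)).
  { clear Hb. induction fam as [|c fam IH]; simpl; auto.
    inversion Hf; subst. rewrite length_app, length_cycle_edges.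
    destruct H1 as [Hc _]. apply cycle_walk in Hc. destruct Hc as [Hw Hn].
    assert (length c < k).
    { apply (path_bound adj k no_path); auto. eapply walk_mono; [|exact Hw].
      intros a b [H _]; auto. }
    specialize (IH H2). lia. }
  nia.
Qed.

Definition Tb (k d : nat) := (d - 1) * ((k-1)*(k-1) + 2).

Lemma phase {V} (adj : V -> V -> Prop) (Hs : forall x y, adj x y -> adj y x)
  (Hirr : forall x, ~ adj x x) k (no_path : ~ has_path_on adj k)
  (few : forall v, ~ on_k_disjoint_cycles adj v k) :
  forall d D x v, depth_le adj d D x -> conn (cur_adj adj D) x v ->
    herder_wins adj (Tb k d) D v.
Proof.
  induction d as [|d IH]; intros D x v Hd Hxv.
  - exfalso. specialize (Hd [] ltac:(constructor; [intros []|constructor]) I). simpl in Hd. lia.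
  - destruct d as [|d'].
    + assert (Hiso : isolated adj D x).
      { intros y Hy. assert (Hxy : x <> y).
        { intros <-. apply (Hirr x). apply Hy. }
        specialize (Hd [y]). simpl in Hd.
        assert (2 <= 1); [|lia]. apply Hd; [|split; auto].
        constructor; [intros [E|[]]; auto|constructor; [intros []|constructor]]. }
      destruct Hxv as [<-|Hxv]. exact Hiso.
      apply clos_trans_t1n in Hxv. exfalso.
      destruct Hxv as [y H|y z H _]; eapply Hiso; eauto.
    + destruct (max_fam adj k few D x) as [fam [Hf Hmax]].
      pose proof (fam_edges_len adj k no_path few D x fam Hf) as HE.
      set (E0 := flat_map cycle_edges fam) in *.
      apply hw_le with (n := length E0 + (2 + Tb k (S d'))).
      { unfold Tb. simpl. rewrite !Nat.sub_0_r. lia. }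
      apply del_list. intros D1 w Hsub Habs Hvw.
      pose proof (no_cycle_after adj Hs D D1 x fam Hf Hmax Hsub Habs) as NC.
      assert (Hxw : conn (cur_adj adj D) x w) by (eapply conn_trans; eauto).
      assert (BS : forall D' w, (forall a b, cur_adj adj D' a b -> cur_adj adj D a b) ->
                (forall c, is_cycle (cur_adj adj D') c -> In x c -> False) ->
                w <> x -> clos_trans V (cur_adj adj D') x w -> conn (cur_adj adj D) x w ->
                herder_wins adj (S (Tb k (S d'))) D' w).
      { intros D' w0 Hs' NC' Hw0 Hct Hc0.
        destruct (bridge adj Hs Hirr D' x w0 NC' Hw0 Hct) as [z [Hxz Hnc]].
        right. exists x, z. split; auto. intros w' _ Hww'.
        assert (Hn' : ~ conn (cur_adj adj ((x,z)::D')) x w').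
        { intros Hc. apply Hnc. eapply conn_trans; [exact Hc|]. apply conn_sym.
          intros a b; apply cur_sym; auto. right; auto. }
        assert (Hc' : conn (cur_adj adj D) x w').
        { eapply conn_trans; [exact Hc0|]. right. eapply ct_mono; [|exact Hww'].
          intros a b Hab. apply Hs'. eapply cur_cons_sub; eauto. }
        destruct (reroot adj Hs (S d') D ((x,z)::D') x w' Hd Hc') as [y [Hy1 Hy2]]; auto.
        { intros a b Hab. apply Hs'. eapply cur_cons_sub; eauto. }
        eapply IH; eauto. }
      destruct (classic (conn (cur_adj adj D1) x w)) as [Hc|Hnc].
      * destruct (classic (w = x)) as [->|Hwx].
        -- destruct (classic (isolated adj D1 x)) as [Hi|Hi]; [left; auto|].
           apply not_all_not_ex in Hi. destruct Hi as [y Hy].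
           right. exists x, y. split; auto. intros w' Hw'x Hct.
           apply BS; auto.
           ++ intros a b Hab. apply Hsub. eapply cur_cons_sub; eauto.
           ++ intros c Hc' Hin. apply (NC c); auto. eapply is_cycle_mono; [|exact Hc'].
              intros a b Hab; eapply cur_cons_sub; eauto.
           ++ right. eapply ct_mono; [|exact Hct]. intros a b Hab. apply Hsub.
              eapply cur_cons_sub; eauto.
        -- destruct Hc as [E|Hc]; [congruence|]. apply hw_S. apply BS; auto.
      * destruct (reroot adj Hs (S d') D D1 x w Hd Hxw Hsub Hnc) as [y [Hy1 Hy2]].
        apply hw_le with (n := Tb k (S d')); [lia|]. eapply IH; eauto.
Qed.

Theorem mainTheorem18 (V : Type) (adj : V -> V -> Prop)
  (adj_sym : forall x y, adj x y -> adj y x)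
  (adj_irrefl : forall x, ~ adj x x)
  (k : nat) (hk : 0 < k)
  (no_path : ~ has_path_on adj k)
  (few_cycles : forall v, ~ on_k_disjoint_cycles adj v k) :
  cat_le adj (k * k * k + 3 * k - (2 * k * k + 2)).
Proof.
  intros v. apply hw_le with (n := Tb k (k-1)).
  - unfold Tb. destruct k as [|j]; [lia|]. replace (S j - 1) with j by lia.
    destruct j as [|i]; [lia|]. replace (S i - 1) with i by lia.
    assert (S (S i) * S (S i) * S (S i) + 3 * S (S i) >= 2 * S (S i) * S (S i) + 2) by nia.
    nia.
  - apply (phase adj adj_sym adj_irrefl k no_path few_cycles (k-1) [] v v).
    + intros t Hn Hw. pose proof (path_bound adj k no_path (v::t) Hn) as H.
      assert (length (v::t) < k); [|lia]. apply H. eapply walk_mono; [|exact Hw].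
      intros a b [Hab _]; auto.
    + left; auto.
Qed.
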